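(* In the setting where $f(x,y)=(ax+by-\lfloor ax+by\rfloor,\ cx+dy-\lfloor cx+dy\rfloor)$ on $[0,1)^2$, $M=\begin{pmatrix}a&b\\c&d\end{pmatrix}$ has a real eigenvalue with eigenvector $(\tau,1)^T$, $\tau\neq0$, and $d\tau-b\neq 0$ with $\left|\frac{\tau}{d\tau-b}\right|<1$: for every $(x_0,y_0)\in[0,1)^2$ and every $n\ge0$, $$\gamma_n=-\frac{1}{\tau}\sum_{j\ge 0}\left(\frac{\tau}{d\tau-b}\right)^{j+1}s_{n+j}+\sum_{j\ge 0}\left(\frac{\tau}{d\tau-b}\right)^{j+1}t_{n+j},$$ where $(x_n,y_n)=f^n(x_0,y_0)$, $s_n=\lfloor ax_n+by_n\rfloor$, $t_n=\lfloor cx_n+dy_n\rfloor$, and $\gamma_n=y_n-\frac1\tau x_n$.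
   Context: $f$ is the linear map of $M$ followed by reduction mod 1 in each coordinate; $(s_n,t_n)$ is the integer code of the $n$-th iterate so that $x_{n+1}=ax_n+by_n-s_n$, $y_{n+1}=cx_n+dy_n-t_n$. *)

(* Defs.v *)
From Stdlib Require Import Reals.
From Coquelicot Require Import Coquelicot.
Open Scope R_scope.

(* floor of a real number: Int_part x = up x - 1 is the integer floor *)
Definition floorR (x : R) : R := IZR (Int_part x).

Definition fmap (a b c d : R) (p : R * R) : R * R :=
  let (x, y) := p in
  (a * x + b * y - floorR (a * x + b * y),
   c * x + d * y - floorR (c * x + d * y)).

Fixpoint orbit (a b c d x0 y0 : R) (n : nat) : R * R :=
  match n with
  | O => (x0, y0)
  | S m => fmap a b c d (orbit a b c d x0 y0 m)
  end.

Definition xn a b c d x0 y0 n := fst (orbit a b c d x0 y0 n).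
Definition yn a b c d x0 y0 n := snd (orbit a b c d x0 y0 n).

Definition sn a b c d x0 y0 n :=
  floorR (a * xn a b c d x0 y0 n + b * yn a b c d x0 y0 n).
Definition tn a b c d x0 y0 n :=
  floorR (c * xn a b c d x0 y0 n + d * yn a b c d x0 y0 n).

Definition gamman a b c d x0 y0 tau n :=
  yn a b c d x0 y0 n - (1 / tau) * xn a b c d x0 y0 n.

(* Main.v *)
Require Import Defs.
From Stdlib Require Import Reals Lra Lia.
From Coquelicot Require Import Coquelicot.
Open Scope R_scope.

Lemma floor_bnd (z : R) : floorR z <= z < floorR z + 1.
Proof. unfold floorR. destruct (base_Int_part z). lra. Qed.

Lemma step_eq a b c d x0 y0 k :
  xn a b c d x0 y0 (S k) = a * xn a b c d x0 y0 k + b * yn a b c d x0 y0 k - sn a b c d x0 y0 k /\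
  yn a b c d x0 y0 (S k) = c * xn a b c d x0 y0 k + d * yn a b c d x0 y0 k - tn a b c d x0 y0 k.
Proof.
  unfold sn, tn, xn, yn. simpl. destruct (orbit a b c d x0 y0 k) as [x y]. simpl. split; reflexivity.
Qed.

Lemma range a b c d x0 y0 (Hx0 : 0 <= x0 < 1) (Hy0 : 0 <= y0 < 1) k :
  0 <= xn a b c d x0 y0 k < 1 /\ 0 <= yn a b c d x0 y0 k < 1.
Proof.
  destruct k as [|k]. { unfold xn, yn; simpl; auto. }
  destruct (step_eq a b c d x0 y0 k) as [E1 E2]. rewrite E1, E2. unfold sn, tn.
  pose proof (floor_bnd (a * xn a b c d x0 y0 k + b * yn a b c d x0 y0 k)).
  pose proof (floor_bnd (c * xn a b c d x0 y0 k + d * yn a b c d x0 y0 k)).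
  lra.
Qed.

Lemma abs_floor_le z : Rabs (floorR z) <= Rabs z + 1.
Proof.
  pose proof (floor_bnd z). unfold Rabs. repeat destruct Rcase_abs; lra.
Qed.

Lemma lin_bnd p q x y : 0 <= x < 1 -> 0 <= y < 1 -> Rabs (p * x + q * y) <= Rabs p + Rabs q.
Proof.
  intros Hx Hy. eapply Rle_trans. apply Rabs_triang. rewrite !Rabs_mult.
  rewrite (Rabs_right x) by lra. rewrite (Rabs_right y) by lra.
  pose proof (Rabs_pos p). pose proof (Rabs_pos q). nra.
Qed.

Lemma ex_geom_bnd (mu K : R) (f : nat -> R) :
  Rabs mu < 1 -> (forall j, Rabs (f j) <= K) ->
  ex_series (fun j => mu ^ (j + 1) * f j).
Proof.
  intros Hm Hf.
  apply (@ex_series_le R_AbsRing R_CompleteNormedModule _ (fun j => (K * Rabs mu) * (Rabs mu) ^ j)).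
  - intros j. change norm with Rabs. simpl. rewrite Rabs_mult, <- RPow_abs.
    rewrite Nat.add_1_r. simpl. pose proof (Hf j). pose proof (Rabs_pos mu).
    pose proof (pow_le (Rabs mu) j H0).
    assert (0 <= Rabs mu * Rabs mu ^ j) by (apply Rmult_le_pos; auto).
    pose proof (Rabs_pos (f j)). nra.
  - apply (ex_series_scal_l (K * Rabs mu) (fun j => Rabs mu ^ j)).
    eexists. apply is_series_geom. rewrite Rabs_Rabsolu. auto.
Qed.

Theorem mainTheorem2 (a b c d tau lam : R)
  (Heig1 : a * tau + b * 1 = lam * tau)
  (Heig2 : c * tau + d * 1 = lam * 1)
  (Htau : tau <> 0)
  (Hden : d * tau - b <> 0)
  (Hmu : Rabs (tau / (d * tau - b)) < 1)
  (x0 y0 : R) (Hx0 : 0 <= x0 < 1) (Hy0 : 0 <= y0 < 1) (n : nat) :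
  exists S T : R,
    is_series (fun j : nat => (tau / (d * tau - b)) ^ (j + 1) * sn a b c d x0 y0 (n + j)) S /\
    is_series (fun j : nat => (tau / (d * tau - b)) ^ (j + 1) * tn a b c d x0 y0 (n + j)) T /\
    gamman a b c d x0 y0 tau n = - (1 / tau) * S + T.
Proof.
  set (mu := tau / (d * tau - b)).
  set (s := sn a b c d x0 y0). set (t := tn a b c d x0 y0).
  set (g := gamman a b c d x0 y0 tau).
  set (u := fun j => mu ^ (j + 1) * s (n + j)%nat).
  set (v := fun j => mu ^ (j + 1) * t (n + j)%nat).
  assert (Hu : ex_series u).
  { apply (ex_geom_bnd mu (Rabs a + Rabs b + 1)); auto. intros j.
    unfold s, sn. eapply Rle_trans. apply abs_floor_le.
    destruct (range a b c d x0 y0 Hx0 Hy0 (n + j)).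
    pose proof (lin_bnd a b _ _ H H0). lra. }
  assert (Hv : ex_series v).
  { apply (ex_geom_bnd mu (Rabs c + Rabs d + 1)); auto. intros j.
    unfold t, tn. eapply Rle_trans. apply abs_floor_le.
    destruct (range a b c d x0 y0 Hx0 Hy0 (n + j)).
    pose proof (lin_bnd c d _ _ H H0). lra. }
  exists (Series u), (Series v).
  split; [apply Series_correct; auto|]. split; [apply Series_correct; auto|].
  assert (Hrec : forall k, g k = mu * g (S k) + mu * (t k - s k / tau)).
  { intros k. unfold g, gamman. destruct (step_eq a b c d x0 y0 k) as [E1 E2].
    rewrite E1, E2. fold (s k) (t k). unfold mu.
    assert (Hc : c = (lam - d) / tau) by (field_simplify_eq; lra).
    assert (Ha : a = lam - b / tau) by (field_simplify_eq; lra).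
    rewrite Hc, Ha. field. split; auto. }
  assert (Hbd : forall k, Rabs (g k) <= 1 + Rabs (1 / tau)).
  { intros k. unfold g, gamman. destruct (range a b c d x0 y0 Hx0 Hy0 k).
    eapply Rle_trans. apply Rabs_triang. rewrite Rabs_Ropp, Rabs_mult.
    rewrite (Rabs_right (xn _ _ _ _ _ _ k)) by lra.
    rewrite (Rabs_right (yn _ _ _ _ _ _ k)) by lra.
    pose proof (Rabs_pos (1/tau)). nra. }
  set (w := fun j => v j - (1 / tau) * u j).
  assert (Hw : is_series w (g n)).
  { assert (Hps : forall N, sum_n w N = g n - mu ^ (N + 1) * g (n + N + 1)%nat).
    { induction N as [|N IH].
      - rewrite sum_O. unfold w, u, v. rewrite (Hrec n).
        replace (n + 0 + 1)%nat with (S n) by lia. replace (n + 0)%nat with n by lia.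
        simpl. field. auto.
      - rewrite sum_Sn, IH. change plus with Rplus. simpl.
        rewrite (Hrec (n + N + 1)%nat). unfold w, u, v.
        replace (S (n + N + 1)) with (n + S N + 1)%nat by lia.
        replace (n + S N)%nat with (n + N + 1)%nat by lia.
        replace (S N + 1)%nat with (S (N + 1)) by lia. simpl. field. auto. }
    unfold is_series. change (is_lim_seq (sum_n w) (g n)).
    apply is_lim_seq_ext with (fun N => g n - mu ^ (N + 1) * g (n + N + 1)%nat).
    { intros; symmetry; apply Hps. }
    replace (Finite (g n)) with (Finite (g n - 0)) by (f_equal; ring).
    apply is_lim_seq_minus'. apply is_lim_seq_const.
    set (C := (1 + Rabs (1 / tau)) * Rabs mu).
    apply is_lim_seq_le_le with (fun N => - (C * Rabs mu ^ N)) (fun N => C * Rabs mu ^ N).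
    - intros N. assert (Rabs (mu ^ (N + 1) * g (n + N + 1)%nat) <= C * Rabs mu ^ N).
      { rewrite Rabs_mult, <- RPow_abs. replace (N + 1)%nat with (S N) by lia. simpl. unfold C.
        pose proof (Hbd (n + N + 1)%nat). pose proof (Rabs_pos mu).
        pose proof (pow_le (Rabs mu) N H0). pose proof (Rabs_pos (g (n+N+1)%nat)).
        assert (0 <= Rabs mu * Rabs mu ^ N) by (apply Rmult_le_pos; auto). nra. }
      set (z := mu ^ (N + 1) * g (n + N + 1)%nat) in *.
      pose proof (Rle_abs z). pose proof (Rle_abs (- z)). rewrite Rabs_Ropp in *. lra.
    - replace (Finite 0) with (Rbar_opp (Rbar_mult C 0)) by (simpl; f_equal; ring).
      apply (is_lim_seq_opp (fun N => C * Rabs mu ^ N)).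
      apply is_lim_seq_scal_l. apply is_lim_seq_geom. rewrite Rabs_Rabsolu; auto.
    - replace (Finite 0) with (Rbar_mult C 0) by (simpl; f_equal; ring).
      apply is_lim_seq_scal_l. apply is_lim_seq_geom. rewrite Rabs_Rabsolu; auto. }
  apply is_series_unique in Hw. fold (g n). rewrite <- Hw. unfold w.
  rewrite Series_minus; auto.
  - rewrite Series_scal_l. ring.
  - apply (ex_series_scal_l (1/tau) u) in Hu. exact Hu.
Qed.
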